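(* Let $\Gamma$ be a finitely generated residually nilpotent group, let $F$ be a free group of rank $\mathrm{rk}(\Gamma)$ and write $\Gamma = F/K$. Let $G = F/N$ be a weakly para-$\Gamma$ group. (1) If there exists an automorphism $\phi: F\to F$ with $\phi(N) \geq K$ (i.e. $G$ is of Type I), then $G \cong \Gamma$. (2) If there exists an automorphism $\phi: F \to F$ with $\phi(N) \lneq K$ (i.e. $G$ is of Type II), then $G$ is not residually nilpotent; in particular $G$ is not a para-$\Gamma$ group.
   Context: The lower central series is $\gamma_1(G)=G$, $\gamma_k(G)=[G,\gamma_{k-1}(G)]$. A group is residually nilpotent if $\bigcap_k \gamma_k(G)=\{1\}$. $\mathrm{rk}(\Gamma)$ is the minimum size of a generating set of $\Gamma$. For a finitely generated residually nilpotent group $\Gamma$, a group $G$ is weakly para-$\Gamma$ if $G/\gamma_k(G)\cong \Gamma/\gamma_k(\Gamma)$ for all $k\geq 1$; it is para-$\Gamma$ if moreover $G$ is residually nilpotent. *)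

(* Defs.v *)
From mathcomp Require Import all_boot.
Set Implicit Arguments. Unset Strict Implicit. Unset Printing Implicit Defensive.

Record group := Group {
  carrier :> Type;
  gmul : carrier -> carrier -> carrier;
  ginv : carrier -> carrier;
  gone : carrier;
  gmulA : forall x y z, gmul x (gmul y z) = gmul (gmul x y) z;
  gmul1l : forall x, gmul gone x = x;
  gmulVl : forall x, gmul (ginv x) x = gone
}.
Arguments gmul {g}. Arguments ginv {g}. Arguments gone {g}.

Definition is_hom (G H : group) (f : G -> H) : Prop :=
  forall x y, f (gmul x y) = gmul (f x) (f y).
Definition surj (A B : Type) (f : A -> B) : Prop := forall b, exists a, f a = b.
Definition inj (A B : Type) (f : A -> B) : Prop := forall a a', f a = f a' -> a = a'.
Definition is_iso (G H : group) (f : G -> H) : Prop := is_hom f /\ inj f /\ surj f.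
Definition isomorphic (G H : group) : Prop := exists f : G -> H, is_iso f.

Definition is_subgroup (G : group) (P : G -> Prop) : Prop :=
  P gone /\ (forall x y, P x -> P y -> P (gmul x y)) /\ (forall x, P x -> P (ginv x)).
Definition gen (G : group) (S : G -> Prop) : G -> Prop :=
  fun x => forall P, is_subgroup P -> (forall y, S y -> P y) -> P x.
Definition comm (G : group) (x y : G) : G := gmul (ginv x) (gmul (ginv y) (gmul x y)).

(* lcs G n = gamma_{n+1}(G) *)
Arguments gen {G}.
Fixpoint lcs (G : group) (n : nat) : G -> Prop :=
  match n with
  | 0 => fun _ => True
  | S n' => gen (fun z => exists x y, @lcs G n' y /\ z = @comm G x y)
  end.
(* gamma G k = gamma_k(G) for k >= 1: gamma_1 = G, gamma_k = [G, gamma_{k-1}] *)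
Definition gamma (G : group) (k : nat) : G -> Prop := @lcs G k.-1.

Definition residually_nilpotent (G : group) : Prop :=
  forall x : G, (forall k, 1 <= k -> @gamma G k x) -> x = gone.

Definition generates (G : group) (n : nat) (s : 'I_n -> G) : Prop :=
  forall x, gen (fun y => exists i, y = s i) x.
Definition finitely_generated (G : group) : Prop :=
  exists n (s : 'I_n -> G), generates s.
Definition rank (G : group) (n : nat) : Prop :=
  (exists s : 'I_n -> G, generates s) /\
  (forall m (s : 'I_m -> G), generates s -> n <= m).

Definition free_basis (F : group) (n : nat) (b : 'I_n -> F) : Prop :=
  forall (H : group) (t : 'I_n -> H),
    exists f : F -> H, is_hom f /\ (forall i, f (b i) = t i) /\
      (forall g : F -> H, is_hom g -> (forall i, g (b i) = t i) -> forall x, g x = f x).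
Definition free_of_rank (F : group) (n : nat) : Prop := exists b : 'I_n -> F, free_basis b.

Definition kernel (G H : group) (f : G -> H) : G -> Prop := fun x => f x = gone.
Definition gimage (A B : Type) (f : A -> B) (P : A -> Prop) : B -> Prop :=
  fun y => exists x, P x /\ f x = y.

(* G/A ≅ H/B (A, B normal subgroups), written via a map on representatives:
   f induces a well-defined bijective homomorphism G/A -> H/B. *)
Definition quotient_iso (G : group) (A : G -> Prop) (H : group) (B : H -> Prop) : Prop :=
  exists f : G -> H,
    (forall x y, B (gmul (ginv (f (gmul x y))) (gmul (f x) (f y)))) /\
    (forall x, B (f x) <-> A x) /\
    (forall h, exists x, B (gmul (ginv (f x)) h)).

Definition weakly_para (G Gam : group) : Prop :=
  forall k, 1 <= k -> quotient_iso (@gamma G k) (@gamma Gam k).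
Definition para (G Gam : group) : Prop := weakly_para G Gam /\ residually_nilpotent G.

(* Main.v *)
Require Import Defs.
From HB Require Import structures.
From mathcomp Require Import all_boot all_algebra boolp.
Set Implicit Arguments. Unset Strict Implicit. Unset Printing Implicit Defensive.
Import GRing.Theory.

Section AbHopf.
Local Open Scope ring_scope.
Variable A : zmodType.

Lemma addf0 (f : A -> A) : (forall x y, f (x + y) = f x + f y) -> f 0 = 0.
Proof. by move=> fD; apply: (addrI (f 0)); rewrite -fD !addr0. Qed.

Lemma addfN (f : A -> A) : (forall x y, f (x + y) = f x + f y) -> forall x, f (- x) = - f x.
Proof. move=> fD x; apply/eqP; rewrite -subr_eq0 opprK -fD addNr (addf0 fD) //. Qed.

Lemma addfMn (f : A -> A) : (forall x y, f (x + y) = f x + f y) -> forall x n, f (x *+ n) = f x *+ n.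
Proof. move=> fD x; elim=> [|n IH]; first by rewrite !mulr0n (addf0 fD).
by rewrite !mulrS fD IH. Qed.

Lemma addfMz (f : A -> A) : (forall x y, f (x + y) = f x + f y) -> forall x z, f (x *~ z) = f x *~ z.
Proof. move=> fD x [n|n]; first by rewrite -!pmulrn addfMn.
by rewrite !NegzE !mulrNz (addfN fD) -!pmulrn addfMn. Qed.

Lemma addf_sum (f : A -> A) : (forall x y, f (x + y) = f x + f y) ->
  forall (I : finType) (F : I -> A), f (\sum_i F i) = \sum_i f (F i).
Proof. move=> fD I F; apply: (big_morph f fD (addf0 fD)). Qed.

Variable be : A -> A.
Hypothesis beD : forall x y, be (x + y) = be x + be y.

Lemma iterD k x y : iter k be (x + y) = iter k be x + iter k be y.
Proof. elim: k => [|k IH] //=; by rewrite IH beD. Qed.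

Definition act (p : {poly int}) (x : A) := \sum_(k < size p) iter k be x *~ p`_k.

Lemma act_bound n (p : {poly int}) x : (size p <= n)%N -> act p x = \sum_(k < n) iter k be x *~ p`_k.
Proof.
move=> /subnKC <-; elim: (n - size p)%N => [|d IH]; first by rewrite addn0.
by rewrite addnS big_ord_recr /= -IH nth_default ?mulr0z ?addr0 // leq_addr.
Qed.

Lemma act_addp (p q : {poly int}) x : act (p + q) x = act p x + act q x.
Proof.
set n := maxn (size p) (size q).
rewrite (@act_bound n (p+q)) ?size_polyD // (@act_bound n p) ?leq_maxl //
  (@act_bound n q) ?leq_maxr // -big_split /=.
by apply: eq_bigr => k _; rewrite coefD mulrzDr.
Qed.

Lemma act_0p x : act 0 x = 0.
Proof. by rewrite /act size_poly0 big_ord0. Qed.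

Lemma act_oppp (p : {poly int}) x : act (- p) x = - act p x.
Proof. apply/eqP; rewrite -subr_eq0 opprK -act_addp addNr act_0p //. Qed.

Lemma act_C (c : int) x : act c%:P x = x *~ c.
Proof. by rewrite (@act_bound 1) ?size_polyC ?leq_b1 // big_ord1 coefC. Qed.

Lemma act_MX (p : {poly int}) x : act (p * 'X) x = act p (be x).
Proof.
rewrite (@act_bound (size p).+1) ?(leq_trans (size_polyMleq _ _)) ?size_polyX ?addn2 //.
rewrite big_ord_recl coefMX /= mulr0z add0r /act; apply: eq_bigr => k _.
by rewrite coefMX /= add0n -iterS iterSr.
Qed.

Lemma act_addx (p : {poly int}) x y : act p (x + y) = act p x + act p y.
Proof. rewrite /act -big_split /=; apply: eq_bigr => k _; by rewrite iterD mulrzDl. Qed.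

Lemma act_be (p : {poly int}) x : act p (be x) = be (act p x).
Proof.
rewrite /act (addf_sum beD); apply: eq_bigr => k _.
by rewrite (addfMz beD) -iterSr.
Qed.

Lemma act_CM (c : int) (p : {poly int}) x : act (c%:P * p) x = act p x *~ c.
Proof.
rewrite (@act_bound (size p)); last first.
  apply: leq_trans (size_polyMleq _ _) _; rewrite size_polyC.
  by case: (c != 0); rewrite ?add0n ?add1n ?leq_pred.
rewrite /act mulrz_suml; apply: eq_bigr => k _; by rewrite coefCM mulrC mulrzA.
Qed.

Lemma act_mul (p q : {poly int}) x : act (p * q) x = act p (act q x).
Proof.
elim/poly_ind: p x => [|p c IH] x; first by rewrite mul0r !act_0p.
by rewrite mulrDl mulrAC act_addp act_MX IH act_CM act_addp act_MX act_C act_be.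
Qed.

Lemma act_sump (I : finType) (F : I -> {poly int}) x : act (\sum_i F i) x = \sum_i act (F i) x.
Proof. apply: (big_morph (fun p => act p x) (fun p q => act_addp p q x) (act_0p x)). Qed.

Lemma ab_hopf_ord m (t : 'I_m -> A)
  (gen : forall x, exists c : 'I_m -> int, x = \sum_i t i *~ c i)
  (sur : forall y, exists x, be x = y) : forall x, be x = 0 -> x = 0.
Proof.
have : forall a, exists c : 'I_m -> int, t a = \sum_b be (t b) *~ c b.
  move=> a; have [u hu] := sur (t a); have [c hc] := gen u.
  exists c; by rewrite -hu hc (addf_sum beD); apply: eq_bigr => b _; rewrite (addfMz beD).
case/fin_all_exists => C hC.
pose M : 'M[{poly int}]_m := \matrix_(a, b) ((a == b)%:R - (C a b)%:P * 'X).
have h1 : forall a, \sum_b act (M a b) (t b) = 0.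
  move=> a; rewrite /M.
  rewrite (eq_bigr (fun b => act ((a == b)%:R) (t b) - be (t b) *~ C a b)); last first.
    by move=> b _; rewrite mxE act_addp act_oppp act_MX act_C.
  rewrite sumrB -(hC a) (bigD1 a) //= eqxx -polyC1 act_C mulr1z big1 ?addr0 ?subrr //.
  by move=> b /negbTE; rewrite eq_sym => ->; rewrite act_0p.
set d := \det M.
have h2 : forall c, act d (t c) = 0.
  move=> c; have := congr1 (fun N : 'M[{poly int}]_m => \sum_b act (N c b) (t b)) (mul_adj_mx M).
  have -> : \sum_b act ((\det M)%:M c b) (t b) = act d (t c).
    rewrite (bigD1 c) //= mxE eqxx mulr1n big1 ?addr0 // => b.
    by move/negbTE; rewrite mxE eq_sym => ->; rewrite mulr0n act_0p.
  move<-; rewrite (eq_bigr (fun b => \sum_a act (\adj M c a) (act (M a b) (t b)))); last first.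
    by move=> b _; rewrite mxE act_sump; apply: eq_bigr => a _; rewrite act_mul.
  rewrite exchange_big /= big1 // => a _.
  by rewrite -(addf_sum (act_addx (\adj M c a))) h1 (addf0 (act_addx _)).
have h3 : d`_0 = 1.
  rewrite -horner_coef0 -/(horner_eval 0 d) /d -det_map_mx.
  rewrite (_ : map_mx _ M = 1%:M) ?det1 //; apply/matrixP => a b.
  rewrite !mxE rmorphB rmorphM /= !horner_evalE hornerX mulr0 subr0.
  by case: (a == b); rewrite ?hornerC ?horner1 ?horner0.
have h4 : forall x, act d x = 0.
  move=> x; have [c ->] := gen x.
  rewrite (addf_sum (act_addx d)) big1 // => b _.
  by rewrite (addfMz (act_addx d)) h2 mul0rz.
move=> x bx; rewrite -(h4 x) -(poly_take_drop 1 d) act_addp expr1 act_MX bx.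
rewrite (addf0 (act_addx _)) addr0 (@act_bound 1) ?size_take_poly // big_ord1 /=.
by rewrite coef_take_poly /= h3 mulr1z.
Qed.
Lemma ab_hopf (I : finType) (t : I -> A)
  (gen : forall x, exists c : I -> int, x = \sum_i t i *~ c i)
  (sur : forall y, exists x, be x = y) : forall x, be x = 0 -> x = 0.
Proof.
apply: (@ab_hopf_ord #|I| (fun j => t (enum_val j))) => // x.
have [c ->] := gen x; exists (fun j => c (enum_val j)).
by have := big_enum_val (R := A) (op := +%R) (idx := 0) (A := I) (fun i => t i *~ c i).
Qed.
End AbHopf.

Section Basic.
Variable P : group.
Implicit Types x y z : P.

Lemma gmulgV x : gmul x (ginv x) = gone.
Proof.
rewrite -[LHS]gmul1l -{1}(gmulVl (ginv x)) -gmulA (gmulA (ginv x)) gmulVl gmul1l.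
by rewrite gmulVl.
Qed.

Lemma gmulg1 x : gmul x gone = x.
Proof. by rewrite -(gmulVl x) gmulA gmulgV gmul1l. Qed.

Lemma gmulKg x y : gmul (ginv x) (gmul x y) = y.
Proof. by rewrite gmulA gmulVl gmul1l. Qed.

Lemma gmulKVg x y : gmul x (gmul (ginv x) y) = y.
Proof. by rewrite gmulA gmulgV gmul1l. Qed.

Lemma ginvg_uniq x y : gmul x y = gone -> y = ginv x.
Proof. by move=> h; rewrite -(gmulKg x y) h gmulg1. Qed.

Lemma ginvgK x : ginv (ginv x) = x.
Proof. by symmetry; apply: ginvg_uniq; rewrite gmulVl. Qed.

Lemma ginvMg x y : ginv (gmul x y) = gmul (ginv y) (ginv x).
Proof. by symmetry; apply: ginvg_uniq; rewrite -gmulA gmulKVg gmulgV. Qed.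

Lemma ginv1g : ginv (gone : P) = gone.
Proof. by symmetry; apply: ginvg_uniq; rewrite gmulg1. Qed.

Lemma gmulgI x y z : gmul x y = gmul x z -> y = z.
Proof. by move=> h; rewrite -(gmulKg x y) h gmulKg. Qed.

End Basic.

Ltac gnorm := repeat (rewrite ?ginvMg ?ginvgK ?ginv1g -?gmulA ?gmulKg ?gmulKVg ?gmulgV ?gmulVl ?gmul1l ?gmulg1).

Definition conjg (P : group) (g x : P) := gmul (ginv g) (gmul x g).
Definition normal (P : group) (N : P -> Prop) :=
  is_subgroup N /\ forall x g, N x -> N (conjg g x).
Definition cong (P : group) (N : P -> Prop) (x y : P) := N (gmul (ginv x) y).

Section Sub.
Variable P : group.
Implicit Types x y z : P.

Lemma gen_sub (S : P -> Prop) : is_subgroup (gen S).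
Proof.
split; first by move=> Q [h1 _] _.
split.
  move=> x y hx hy Q hQ hS; have [_ [hM _]] := hQ; apply: hM; [exact: hx | exact: hy].
move=> x hx Q hQ hS; have [_ [_ hV]] := hQ; apply: hV; exact: hx.
Qed.

Lemma gen_in (S : P -> Prop) x : S x -> gen S x.
Proof. by move=> h Q _ hS; apply: hS. Qed.

Lemma gen_min (S Q : P -> Prop) : is_subgroup Q -> (forall y, S y -> Q y) ->
  forall x, gen S x -> Q x.
Proof. by move=> hQ hS x hx; apply: hx. Qed.

Lemma sg1 (Q : P -> Prop) : is_subgroup Q -> Q gone.
Proof. by case. Qed.
Lemma sgM (Q : P -> Prop) : is_subgroup Q -> forall x y, Q x -> Q y -> Q (gmul x y).
Proof. by case=> _ []. Qed.
Lemma sgV (Q : P -> Prop) : is_subgroup Q -> forall x, Q x -> Q (ginv x).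
Proof. by case=> _ []. Qed.
Lemma sgVV (Q : P -> Prop) : is_subgroup Q -> forall x, Q (ginv x) -> Q x.
Proof. by move=> hQ x /(sgV hQ); rewrite ginvgK. Qed.

Lemma lcs_sub n : is_subgroup (@lcs P n).
Proof. case: n => [|n] /=; last exact: gen_sub. by split. Qed.

Lemma lcs1 n : @lcs P n gone.
Proof. exact: sg1 (lcs_sub n). Qed.

Lemma lcs_conj n x g : lcs n x -> lcs n (conjg g x).
Proof.
elim: n x g => [|n IH] x g //= hx.
have hS := gen_sub (fun z => exists x0 y, lcs n y /\ z = comm x0 y).
apply: (gen_min (Q := fun x => forall g, gen (fun z => exists x0 y, lcs n y /\ z = comm x0 y) (conjg g x))) hx g.
- split; first by move=> g; rewrite /conjg; gnorm; exact: sg1 hS.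
  split.
    move=> a b ha hb g; have -> : conjg g (gmul a b) = gmul (conjg g a) (conjg g b) by rewrite /conjg; gnorm.
    exact: sgM hS _ _ (ha g) (hb g).
  move=> a ha g; have -> : conjg g (ginv a) = ginv (conjg g a) by rewrite /conjg; gnorm.
  exact: sgV hS _ (ha g).
- move=> y [a [b [hb ->]]] g; apply: gen_in; exists (conjg g a), (conjg g b); split; first exact: IH.
  by rewrite /conjg /comm; gnorm.
Qed.

Lemma lcs_normal n : normal (@lcs P n).
Proof. split; [exact: lcs_sub | move=> x g; exact: lcs_conj]. Qed.

Lemma comm_r n x y : lcs n y -> @lcs P n.+1 (comm x y).
Proof. by move=> h; apply: gen_in; exists x, y. Qed.

Lemma comm_l n x y : lcs n x -> @lcs P n.+1 (comm x y).
Proof.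
move=> h; have -> : comm x y = ginv (comm y x) by rewrite /comm; gnorm.
apply: (sgV (lcs_sub n.+1)); exact: comm_r.
Qed.

Lemma lcs_decr n x : @lcs P n.+1 x -> lcs n x.
Proof.
apply: gen_min; first exact: lcs_sub.
move=> y [a [b [hb ->]]].
have -> : comm a b = gmul (conjg a (ginv b)) b by rewrite /comm /conjg; gnorm.
apply: (sgM (lcs_sub n)) => //; apply: lcs_conj; exact: (sgV (lcs_sub n)).
Qed.

Lemma lcs_mono m n x : m <= n -> @lcs P n x -> lcs m x.
Proof.
move=> /subnKC <-; elim: (n - m) x => [|d IH] x; first by rewrite addn0.
by rewrite addnS => /lcs_decr /IH.
Qed.

Variable N : P -> Prop.
Hypothesis nN : normal N.
Let sN : is_subgroup N := nN.1.

Lemma cong_refl x : cong N x x.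
Proof. by rewrite /cong gmulVl; apply: sg1. Qed.

Lemma cong_sym x y : cong N x y -> cong N y x.
Proof. by rewrite /cong => /(sgV sN); rewrite ginvMg ginvgK. Qed.

Lemma cong_trans x y z : cong N x y -> cong N y z -> cong N x z.
Proof.
rewrite /cong => h1 h2; have := sgM sN h1 h2.
by rewrite -gmulA gmulKVg.
Qed.

Lemma cong_mul x x' y y' : cong N x x' -> cong N y y' -> cong N (gmul x y) (gmul x' y').
Proof.
rewrite /cong => h1 h2.
have -> : gmul (ginv (gmul x y)) (gmul x' y') =
  gmul (conjg y (gmul (ginv x) x')) (gmul (ginv y) y') by rewrite /conjg; gnorm.
apply: (sgM sN) => //; exact: nN.2.
Qed.

Lemma cong_inv x x' : cong N x x' -> cong N (ginv x) (ginv x').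
Proof.
rewrite /cong => h.
have -> : gmul (ginv (ginv x)) (ginv x') = conjg (ginv x) (ginv (gmul (ginv x) x'))
  by rewrite /conjg; gnorm.
apply: nN.2; exact: sgV.
Qed.

Lemma cong_comm x x' y y' : cong N x x' -> cong N y y' -> cong N (comm x y) (comm x' y').
Proof.
move=> h1 h2; rewrite /comm; apply: cong_mul; first exact: cong_inv.
apply: cong_mul; first exact: cong_inv.
exact: cong_mul.
Qed.

Lemma cong1 x : cong N gone x <-> N x.
Proof. by rewrite /cong ginv1g gmul1l. Qed.

Lemma cong1r x : cong N x gone <-> N x.
Proof. split; [move/cong_sym/cong1 | move/cong1/cong_sym] => //. Qed.

Lemma cong_eq x y : x = y -> cong N x y.
Proof. move->; exact: cong_refl. Qed.

Lemma cong_sub (M : P -> Prop) x y : (forall z, N z -> M z) -> cong N x y -> cong M x y.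
Proof. by move=> h; apply: h. Qed.

Lemma cong_mem (M : P -> Prop) x y : is_subgroup M -> (forall z, N z -> M z) ->
  cong N x y -> M x -> M y.
Proof.
move=> hM hNM h hx; have -> : y = gmul x (gmul (ginv x) y) by gnorm.
apply: (sgM hM) => //; exact: hNM.
Qed.

End Sub.

Arguments lcs_sub {P} n.
Arguments lcs_normal {P} n.

Section ModHom.
Variables (P Q : group) (N : Q -> Prop) (f : P -> Q).
Hypothesis nN : normal N.
Hypothesis hf : forall x y, cong N (f (gmul x y)) (gmul (f x) (f y)).

Lemma fm1 : cong N (f gone) gone.
Proof.
apply/cong1r => //; have := hf gone gone; rewrite gmul1l /cong gmulKg //.
Qed.

Lemma fmV x : cong N (f (ginv x)) (ginv (f x)).
Proof.
have h1 : cong N gone (gmul (f (ginv x)) (f x)).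
  have := hf (ginv x) x; rewrite gmulVl => h; apply: (cong_trans nN _ h).
  exact: (cong_sym nN fm1).
have := cong_mul nN h1 (cong_refl nN (ginv (f x))).
rewrite gmul1l -gmulA gmulgV gmulg1 => h; exact: (cong_sym nN h).
Qed.

Lemma fmC x y : cong N (f (comm x y)) (comm (f x) (f y)).
Proof.
rewrite /comm.
apply: (cong_trans nN (hf _ _)); apply: (cong_mul nN); first exact: fmV.
apply: (cong_trans nN (hf _ _)); apply: (cong_mul nN); first exact: fmV.
exact: hf.
Qed.

Lemma fm_lcs i : (forall z, N z -> lcs i z) -> forall x, lcs i x -> lcs i (f x).
Proof.
elim: i => [|i IH] // hNi.
have hNi' : forall z, N z -> lcs i z by move=> z /hNi; apply: lcs_decr.
apply: gen_min.
- split; first by apply: (cong_mem (lcs_sub _) hNi (cong_sym nN fm1)); apply: lcs1.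
  split.
    move=> a b ha hb; apply: (cong_mem (lcs_sub _) hNi (cong_sym nN (hf a b))).
    exact: (sgM (lcs_sub _) ha hb).
  move=> a ha; apply: (cong_mem (lcs_sub _) hNi (cong_sym nN (fmV a))).
  exact: (sgV (lcs_sub _) ha).
- move=> y [a [b [hb ->]]]; apply: (cong_mem (lcs_sub _) hNi (cong_sym nN (fmC a b))).
  apply: comm_r; exact: IH.
Qed.

End ModHom.

Record ldata (P : group) := LData {
  lH : P -> Prop; lN : P -> Prop;
  lsgH : is_subgroup lH; lnN : normal lN; lNH : forall x, lN x -> lH x;
  labH : forall x y, lH x -> lH y -> lN (comm x y) }.

Section Layer.
Local Open Scope ring_scope.
Variables (P : group) (D : ldata P).
Local Notation H := (lH D).
Local Notation N := (lN D).
Let sgH := lsgH D.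
Let nN := lnN D.
Let abH := @labH P D.

Definition cset (x : P) : P -> Prop := fun y => cong N x y.
Record lay := Lay { lset : P -> Prop; lax : exists x, H x /\ lset = cset x }.
HB.instance Definition _ := gen_eqMixin lay.
HB.instance Definition _ := gen_choiceMixin lay.

Lemma lay_eq (a b : lay) : lset a = lset b -> a = b.
Proof.
case: a b => [s1 p1] [s2 p2] /= e; subst s2; congr Lay; exact: Prop_irrelevance.
Qed.

Definition hpick x := if pselect (H x) then x else gone.
Lemma hpickH x : H (hpick x).
Proof. rewrite /hpick; destruct (pselect (H x)) => //; exact: (sg1 sgH). Qed.
Lemma hpickE x : H x -> hpick x = x.
Proof. by rewrite /hpick; destruct (pselect (H x)). Qed.

Definition cls x : lay := @Lay (cset (hpick x)) (ex_intro _ (hpick x) (conj (hpickH x) erefl)).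

Lemma cls_eq x y : H x -> H y -> (cls x = cls y <-> cong N x y).
Proof.
move=> hx hy; split.
  move/(congr1 lset) => /=; rewrite !hpickE // => e.
  have : cset y y by exact: cong_refl.
  by rewrite -e.
move=> h; apply: lay_eq => /=; rewrite !hpickE //; apply: funext => z; apply: propext.
rewrite /cset; split => h'.
  exact: (cong_trans nN (cong_sym nN h) h').
exact: (cong_trans nN h h').
Qed.

Lemma clsP (a : lay) : exists x, H x /\ a = cls x.
Proof.
case: a => s [x [hx e]]; exists x; split => //; apply: lay_eq => /=.
by rewrite hpickE.
Qed.

Definition rep (a : lay) : P := proj1_sig (cid (clsP a)).
Lemma repH a : H (rep a).
Proof. by rewrite /rep; case: cid => x [] /=. Qed.
Lemma repK a : cls (rep a) = a.
Proof. by rewrite /rep; case: cid => x [] /=. Qed.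
Lemma rep_cong x : H x -> cong N (rep (cls x)) x.
Proof. move=> hx; apply/(cls_eq (repH _) hx); exact: repK. Qed.

Definition lzero := cls gone.
Definition lopp a := cls (ginv (rep a)).
Definition ladd a b := cls (gmul (rep a) (rep b)).

Lemma laddE x y : H x -> H y -> ladd (cls x) (cls y) = cls (gmul x y).
Proof.
move=> hx hy; apply/cls_eq; [apply: (sgM sgH); exact: repH | exact: (sgM sgH) |].
apply: (cong_mul nN); exact: rep_cong.
Qed.

Lemma loppE x : H x -> lopp (cls x) = cls (ginv x).
Proof.
move=> hx; apply/cls_eq; [apply: (sgV sgH); exact: repH | exact: (sgV sgH) |].
apply: (cong_inv nN); exact: rep_cong.
Qed.

Lemma laddA : associative ladd.
Proof.
move=> a b c; case: (clsP a) => x [hx ->]; case: (clsP b) => y [hy ->].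
case: (clsP c) => z [hz ->].
rewrite !laddE ?gmulA //; apply: (sgM sgH) => //.
Qed.

Lemma laddC : commutative ladd.
Proof.
move=> a b; case: (clsP a) => x [hx ->]; case: (clsP b) => y [hy ->].
rewrite !laddE //; apply/cls_eq; try exact: (sgM sgH).
rewrite /cong; have -> : gmul (ginv (gmul x y)) (gmul y x) = comm y x by rewrite /comm; gnorm.
exact: abH.
Qed.

Lemma ladd0 : left_id lzero ladd.
Proof.
move=> a; case: (clsP a) => x [hx ->]; rewrite /lzero laddE ?gmul1l //; exact: sg1 sgH.
Qed.

Lemma laddN : left_inverse lzero lopp ladd.
Proof.
move=> a; case: (clsP a) => x [hx ->]; rewrite loppE // laddE ?gmulVl //; exact: (sgV sgH).
Qed.

HB.instance Definition _ := GRing.isZmodule.Build lay laddA laddC ladd0 laddN.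

Lemma clsM x y : H x -> H y -> (cls (gmul x y) : lay) = cls x + cls y.
Proof. by move=> hx hy; rewrite -laddE. Qed.

Lemma clsV x : H x -> (cls (ginv x) : lay) = - cls x.
Proof. by move=> hx; rewrite -loppE. Qed.

Lemma cls0 x : H x -> ((cls x : lay) = 0 <-> N x).
Proof.
move=> hx; rewrite (_ : 0 = cls gone) //; split.
  move/(cls_eq hx (sg1 sgH)); by move/(cong1r nN).
by move=> h; apply/(cls_eq hx (sg1 sgH)); apply/(cong1r nN).
Qed.

End Layer.

Lemma comm_cong (P : group) k (a a' b b' : P) :
  cong (lcs k.+1) a a' -> cong (lcs k) b b' -> cong (lcs k.+1) (comm a b) (comm a' b').
Proof.
move=> h1 h2; have nK := lcs_normal (P := P) k.+1.
apply: (cong_trans nK (cong_comm nK h1 (cong_refl nK b))).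
rewrite -(gmulKVg b b'); move: h2; rewrite /cong; set z := gmul (ginv b) b' => hz.
have -> : comm a' (gmul b z) = gmul (comm a' z) (gmul (comm a' b) (comm (comm a' b) z))
  by rewrite /comm; gnorm.
apply: (cong_sym nK).
have e1 : cong (lcs k.+1) (comm a' z) gone by apply/(cong1r nK); exact: comm_r.
have e2 : cong (lcs k.+1) (comm (comm a' b) z) gone by apply/(cong1r nK); exact: comm_r.
have := cong_mul nK e1 (cong_mul nK (cong_refl nK (comm a' b)) e2).
by rewrite gmulg1 gmul1l.
Qed.

Section Hopf.
Variables (P : group) (I : finType) (s : I -> P).
Hypothesis gens : forall x, gen (fun y => exists i, y = s i) x.
Variable c : nat.
Variable al : P -> P.
Hypothesis hal : forall x y, cong (lcs c) (al (gmul x y)) (gmul (al x) (al y)).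
Hypothesis sal : forall y, exists x, cong (lcs c) (al x) y.
Let nC := lcs_normal (P := P) c.

Lemma L1 i : i <= c -> forall x, lcs i x -> lcs i (al x).
Proof. move=> hi; apply: (fm_lcs nC hal) => z; exact: lcs_mono hi. Qed.

Lemma wk i (x y : P) : i <= c -> cong (lcs c) x y -> cong (lcs i) x y.
Proof. move=> hi; apply: cong_sub => z; exact: lcs_mono hi. Qed.

Lemma L2 j : j <= c -> forall x y, cong (lcs j) x y -> cong (lcs j) (al x) (al y).
Proof.
move=> hj x y; rewrite -(gmulKVg x y) {1}/cong gmulKg; set w := gmul (ginv x) y => hw.
have nJ := lcs_normal (P := P) j.
apply: (cong_trans nJ _ (cong_sym nJ (wk hj (hal x w)))).
rewrite /cong gmulKg; exact: L1.
Qed.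

Lemma L3 i : i < c -> forall y, lcs i y -> exists x, lcs i x /\ cong (lcs i.+1) (al x) y.
Proof.
elim: i => [|i IH] hi y hy.
  have [x hx] := sal y; exists x; split => //; exact: wk.
have hic : i < c by apply: ltnW.
have nI := lcs_normal (P := P) i.+2.
apply: (gen_min (Q := fun y => exists x, lcs i.+1 x /\ cong (lcs i.+2) (al x) y)) hy.
  split; first by exists gone; split; [exact: lcs1 | exact: (wk hi (fm1 nC hal))].
  split.
    move=> a b [xa [ha ca]] [xb [hb cb]]; exists (gmul xa xb); split.
      exact: (sgM (lcs_sub _) ha hb).
    exact: (cong_trans nI (wk hi (hal xa xb)) (cong_mul nI ca cb)).
  move=> a [xa [ha ca]]; exists (ginv xa); split; first exact: (sgV (lcs_sub _) ha).
  exact: (cong_trans nI (wk hi (fmV nC hal xa)) (cong_inv nI ca)).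
move=> z [a [b [hb ->]]].
have [b' [hb' cb]] := IH hic b hb.
have [a' ca] := sal a.
exists (comm a' b'); split; first exact: comm_r.
apply: (cong_trans nI (wk hi (fmC nC hal a' b'))).
apply: comm_cong => //; exact: wk.
Qed.

Lemma L4 i : exists (J : finType) (t : J -> P), (forall j, lcs i (t j)) /\
  forall y, lcs i y -> gen (fun z => (exists j, z = t j) \/ lcs i.+1 z) y.
Proof.
elim: i => [|i [J [t [ht hgen]]]].
  exists I, s; split => // y _.
  apply: (gen_min (gen_sub _)) (gens y) => z [j ->]; apply: gen_in; left; by exists j.
pose t' := fun p : (I * J)%type => comm (s p.1) (t p.2).
exists (I * J)%type, t'; split; first by move=> p; apply: comm_r.
set U := gen (fun z => (exists j, z = t' j) \/ lcs i.+2 z).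
have sU : is_subgroup U := gen_sub _.
have U2 : forall z, lcs i.+2 z -> U z by move=> z hz; apply: gen_in; right.
have hS : forall j x, U (comm x (t j)).
  move=> j x; apply: (gen_min (Q := fun x => U (comm x (t j)))) (gens x).
    split; first by rewrite /comm; gnorm; exact: (sg1 sU).
    split.
      move=> a b ha hb.
      have -> : comm (gmul a b) (t j) =
        gmul (comm a (t j)) (gmul (comm (comm a (t j)) b) (comm b (t j))) by rewrite /comm; gnorm.
      apply: (sgM sU ha); apply: (sgM sU _ hb); apply: U2; apply: comm_l; exact: comm_r.
    move=> a ha.
    have -> : comm (ginv a) (t j) =
      gmul (ginv (comm a (t j))) (comm (ginv (comm a (t j))) (ginv a)) by rewrite /comm; gnorm.
    apply: (sgM sU (sgV sU ha)); apply: U2; apply: comm_l.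
    apply: (sgV (lcs_sub _)); exact: comm_r.
  move=> z [a ->]; apply: gen_in; left; by exists (a, j).
have hR : forall y, lcs i y -> lcs i y /\ forall x, U (comm x y).
  move=> y hy; apply: (gen_min (Q := fun y => lcs i y /\ forall x, U (comm x y))) (hgen y hy).
    split; first by split; [exact: lcs1 | move=> x; rewrite /comm; gnorm; exact: (sg1 sU)].
    split.
      move=> a b [ha Ua] [hb Ub]; split; first exact: (sgM (lcs_sub _) ha hb).
      move=> x.
      have -> : comm x (gmul a b) =
        gmul (comm x b) (gmul (comm x a) (comm (comm x a) b)) by rewrite /comm; gnorm.
      apply: (sgM sU (Ub x)); apply: (sgM sU (Ua x)); apply: U2; apply: comm_l; exact: comm_r.
    move=> a [ha Ua]; split; first exact: (sgV (lcs_sub _) ha).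
    move=> x.
    have -> : comm x (ginv a) =
      gmul (ginv (comm x a)) (comm (ginv (comm x a)) (ginv a)) by rewrite /comm; gnorm.
    apply: (sgM sU (sgV sU (Ua x))); apply: U2; apply: comm_l.
    apply: (sgV (lcs_sub _)); exact: comm_r.
  move=> z [[j ->]|hz]; first by split; [exact: ht | move=> x; exact: hS].
  split; first exact: lcs_decr.
  move=> x; apply: U2; exact: comm_r.
move=> y hy; apply: (gen_min sU) hy => z [x [y0 [hy0 ->]]].
exact: (hR y0 hy0).2.
Qed.


Local Open Scope ring_scope.
Lemma L5 i : (i < c)%N -> forall x, lcs i x -> lcs i.+1 (al x) -> lcs i.+1 x.
Proof.
move=> hi x hx hax.
pose D := @LData P (lcs i) (lcs i.+1) (lcs_sub i) (lcs_normal i.+1) (@lcs_decr P i)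
  (fun a b _ hb => @comm_r P i a b hb).
have hic : (i.+1 <= c)%N by [].
have hic' : (i <= c)%N by apply: ltnW.
have nI := lcs_normal (P := P) i.+1.
pose be := fun v : lay D => cls D (al (rep v)).
have beE : forall y, lcs i y -> be (cls D y) = cls D (al y).
  move=> y hy; rewrite /be; apply/cls_eq; [apply: L1 => //; exact: repH | exact: L1|].
  apply: L2 => //; exact: (@rep_cong P D y hy).
have beD : forall u v, be (u + v) = be u + be v.
  move=> u v; have [a [ha ->]] := clsP u; have [b [hb ->]] := clsP v.
  rewrite -(@clsM P D _ _ ha hb) beE ?beE //; last exact: (sgM (lcs_sub _) ha hb).
  have h1 := L1 hic' ha; have h2 := L1 hic' hb.
  rewrite -(@clsM P D _ _ h1 h2); apply/cls_eq; [apply: L1 => //; exact: (sgM (lcs_sub _) ha hb)| exact: (sgM (lcs_sub _) h1 h2)|].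
  exact: wk.
have sur : forall v, exists u, be u = v.
  move=> v; have [y [hy ->]] := clsP v; have [x' [hx' cx]] := L3 hi hy.
  exists (cls D x'); rewrite beE //; apply/cls_eq => //; exact: L1.
have [J [t [ht hgen]]] := L4 i.
have gn : forall v, exists cc : J -> int, v = \sum_j cls D (t j) *~ cc j.
  move=> v; have [y [hy ->]] := clsP v.
  suff : lcs i y /\ exists cc : J -> int, cls D y = \sum_j cls D (t j) *~ cc j by case.
  apply: (gen_min (Q := fun y => lcs i y /\ exists cc : J -> int, cls D y = \sum_j cls D (t j) *~ cc j)) (hgen y hy).
    split.
      split; first exact: lcs1.
      exists (fun _ => 0); rewrite big1 => [|j _]; last by rewrite mulr0z.
      by apply/cls0; [exact: lcs1 | exact: lcs1].
    split.
      move=> a b [ha [ca ea]] [hb [cb eb]]; split; first exact: (sgM (lcs_sub _) ha hb).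
      exists (fun j => ca j + cb j); rewrite (@clsM P D _ _ ha hb) ea eb -big_split /=.
      by apply: eq_bigr => j _; rewrite mulrzDr.
    move=> a [ha [ca ea]]; split; first exact: (sgV (lcs_sub _) ha).
    exists (fun j => - ca j); rewrite (@clsV P D _ ha) ea -sumrN.
    by apply: eq_bigr => j _; rewrite mulrNz.
  move=> z [[j ->]|hz].
    split; first exact: ht.
    exists (fun k => (k == j)%:Z); rewrite (bigD1 j) //= eqxx mulr1z big1 ?addr0 // => k.
    by move/negbTE => ->; rewrite mulr0z.
  split; first exact: lcs_decr.
  exists (fun _ => 0); rewrite big1 => [|j _]; last by rewrite mulr0z.
  by apply/cls0 => //; exact: lcs_decr.
have := @ab_hopf _ be beD J (fun j => cls D (t j)) gn sur (cls D x).
rewrite beE // => /(_ (proj2 (@cls0 P D _ (L1 hic' hx)) hax)).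
by move/(@cls0 P D _ hx).
Qed.

Lemma hopf x : lcs c (al x) -> lcs c x.
Proof.
move=> hax; suff : forall i, (i <= c)%N -> lcs i x by apply.
elim => [|i IH] hi //; apply: L5 => //; [exact: IH (ltnW hi) | exact: lcs_mono hi hax].
Qed.

End Hopf.

Section Homs.
Variables (P Q : group) (f : P -> Q).
Hypothesis hf : is_hom f.

Lemma hom1 : f gone = gone.
Proof. apply: (@gmulgI _ (f gone)); by rewrite -hf !gmulg1. Qed.

Lemma homV x : f (ginv x) = ginv (f x).
Proof. apply: ginvg_uniq; by rewrite -hf gmulgV hom1. Qed.

Lemma hom_eq a b : f (gmul (ginv a) b) = gone -> f a = f b.
Proof. by rewrite hf homV => /ginvg_uniq; rewrite ginvgK => ->. Qed.

Lemma hom_eq' a b : f a = f b -> f (gmul (ginv a) b) = gone.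
Proof. by rewrite hf homV => ->; rewrite gmulVl. Qed.

Lemma hom_cong c : forall a b, cong (lcs c) a b -> cong (lcs c) (f a) (f b).
Proof.
move=> a b; rewrite /cong -homV -hf; apply: (fm_lcs (lcs_normal c)) => [x y|//].
by rewrite hf; apply: cong_refl; apply: lcs_normal.
Qed.
End Homs.

Lemma eq_of_inv1 (P : group) (a b : P) : gmul (ginv a) b = gone -> a = b.
Proof. by move/ginvg_uniq; rewrite ginvgK. Qed.

Theorem mainTheorem3 (Gam F G : group) (n : nat) (pK : F -> Gam) (pN : F -> G) :
  residually_nilpotent Gam -> finitely_generated Gam -> rank Gam n ->
  free_of_rank F n ->
  is_hom pK -> surj pK ->   (* Gam = F / K with K = kernel pK *)
  is_hom pN -> surj pN ->   (* G = F / N with N = kernel pN *)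
  weakly_para G Gam ->
  ((exists phi : F -> F, is_iso phi /\
      (forall x, kernel pK x -> gimage phi (kernel pN) x)) ->
     isomorphic G Gam) /\
  ((exists phi : F -> F, is_iso phi /\
      (forall x, gimage phi (kernel pN) x -> kernel pK x) /\
      (exists x, kernel pK x /\ ~ gimage phi (kernel pN) x)) ->
     ~ residually_nilpotent G /\ ~ para G Gam).
Proof.
move=> RN [m [sg gsg]] _ _ hK sK hN sN wp.
have hopfG := hopf gsg.
have wpc : forall c, exists f : G -> Gam,
    (forall x y, cong (lcs c) (f (gmul x y)) (gmul (f x) (f y))) /\
    (forall x, lcs c (f x) <-> lcs c x) /\ (forall h, exists x, cong (lcs c) (f x) h).
  move=> c; exact: (wp c.+1 isT).
split.
- case=> phi [[phom [pinj psurj]] hKN].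
  pose pinv := fun y => proj1_sig (cid (psurj y)).
  have pinvK : forall y, phi (pinv y) = y by move=> y; rewrite /pinv; case: cid.
  pose kinv := fun g => proj1_sig (cid (sK g)).
  have kinvK : forall g, pK (kinv g) = g by move=> g; rewrite /kinv; case: cid.
  have pinvM : forall x y, pinv (gmul x y) = gmul (pinv x) (pinv y).
    by move=> x y; apply: pinj; rewrite phom !pinvK.
  have key : forall a b, pK a = pK b -> pN (pinv a) = pN (pinv b).
    move=> a b /(hom_eq' hK) /hKN [w [hw ew]].
    have -> : pinv b = gmul (pinv a) w.
      by apply: pinj; rewrite phom ew !pinvK gmulKVg.
    by rewrite hN hw gmulg1.
  pose pi := fun g => pN (pinv (kinv g)).
  have pihom : is_hom pi.
    move=> g h; rewrite /pi -hN -pinvM; apply: key; by rewrite hK !kinvK.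
  have pisurj : surj pi.
    move=> z; have [w <-] := sN z; exists (pK (phi w)); rewrite /pi.
    rewrite (key _ (phi w)) ?kinvK //; congr pN; apply: pinj; by rewrite pinvK.
  have piker : forall u, pi u = gone -> u = gone.
    move=> u hu; apply: RN => k hk; rewrite /gamma.
    have [f [fh [fk fs]]] := wpc k.-1.
    apply: (hopfG k.-1 (fun x => f (pi x))).
    + by move=> x y; rewrite pihom; apply: fh.
    + move=> y; have [z hz] := fs y; have [x ex] := pisurj z; exists x; by rewrite ex.
    + by rewrite /= hu; apply/fk; apply: lcs1.
  have piinj : inj pi.
    move=> a b e; apply: eq_of_inv1; apply: piker; exact: (hom_eq' pihom e).
  pose pinv2 := fun z => proj1_sig (cid (pisurj z)).
  have pinv2K : forall z, pi (pinv2 z) = z by move=> z; rewrite /pinv2; case: cid.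
  exists pinv2; split; [|split].
  + by move=> x y; apply: piinj; rewrite pihom !pinv2K.
  + by move=> x y e; rewrite -(pinv2K x) -(pinv2K y) e.
  + by move=> b; exists (pi b); apply: piinj; rewrite pinv2K.
- case=> phi [[phom [pinj psurj]] [hNK [x0 [hx0 nx0]]]].
  pose ninv := fun z => proj1_sig (cid (sN z)).
  have ninvK : forall z, pN (ninv z) = z by move=> z; rewrite /ninv; case: cid.
  have key : forall a b, pN a = pN b -> pK (phi a) = pK (phi b).
    move=> a b /(hom_eq' hN) e; apply: (hom_eq hK); rewrite -(homV phom) -phom.
    apply: hNK; by exists (gmul (ginv a) b).
  pose rho := fun z => pK (phi (ninv z)).
  have rhohom : is_hom rho.
    move=> x y; rewrite /rho -hK -phom; apply: key; by rewrite hN !ninvK.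
  have rhosurj : surj rho.
    move=> g; have [u <-] := sK g; have [w <-] := psurj u; exists (pN w).
    by rewrite /rho; apply: key; rewrite ninvK.
  have [w0 ew0] := psurj x0.
  have z0ne : pN w0 <> gone by move=> h; apply: nx0; exists w0.
  have rz0 : rho (pN w0) = gone.
    by rewrite /rho (key _ w0) ?ninvK // ew0.
  have z0in : forall c, lcs c (pN w0).
    move=> c; have [f [fh [fk fs]]] := wpc c.
    have nC := lcs_normal (P := Gam) c.
    have nCG := lcs_normal (P := G) c.
    have fcong : forall a b, cong (lcs c) a b <-> cong (lcs c) (f a) (f b).
      move=> a b; have e := cong_trans nC (fh (ginv a) b) (cong_mul nC (fmV nC fh a) (cong_refl nC (f b))).
      rewrite /cong; split.
        move/fk => h; exact: (cong_mem (lcs_sub c) (fun z h => h) e h).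
      move=> h; apply/fk; exact: (cong_mem (lcs_sub c) (fun z h => h) (cong_sym nC e) h).
    pose g := fun y => proj1_sig (cid (fs y)).
    have gK : forall y, cong (lcs c) (f (g y)) y by move=> y; rewrite /g; case: cid.
    have gfK : forall w, cong (lcs c) (g (f w)) w by move=> w; apply/fcong; exact: gK.
    suff hf0 : lcs c (f (pN w0)) by apply/fk.
    apply: (@hopfG c (fun y => rho (g y))).
    + move=> x y; rewrite -rhohom; apply: (hom_cong rhohom); apply/fcong.
      apply: (cong_trans nC (gK _)); apply: (cong_sym nC).
      apply: (cong_trans nC (fh _ _)); exact: (cong_mul nC (gK x) (gK y)).
    + move=> y; have [w <-] := rhosurj y; exists (f w); exact: (hom_cong rhohom).
    + apply/(cong1r nC); rewrite -rz0; exact: (hom_cong rhohom (gfK _)).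
  split; first by move=> h; apply: z0ne; apply: h => k _; exact: z0in.
  case=> _ h; apply: z0ne; apply: h => k _; exact: z0in.
Qed.
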